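(* Let $G$ be a finite simple connected graph on $n$ vertices and $m$ a positive integer such that for every set $S$ of at most $m$ vertices, the graph $G-\overline N(S)$ has a connected component with more than $n/2$ vertices. Then $c_{\infty}(G)>m$.
   Context: $N(S)$ is the set of vertices with a neighbour in $S$, $\overline N(S)=S\cup N(S)$, and $G-A$ is the subgraph induced by $V(G)\setminus A$. Cops and Robber with an infinitely fast robber: the game is played on a graph $G$. A set of cops first choose initial vertices (several cops may share a vertex); then the robber, knowing their positions, chooses a vertex. Then the players move in alternating rounds, cops first. In the cops' turn each cop either stays or moves to an adjacent vertex; in the robber's turn she either stays or moves along any path of $G$ starting at her current vertex that contains no vertex currently occupied by a cop. The cops win if at some point a cop moves to the vertex occupied by the robber. $c_{\infty}(G)$ is the minimum number of cops for which the cops have a strategy that guarantees a win. *)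

(* Defs.v *)
From mathcomp Require Import all_boot.
Set Implicit Arguments. Unset Strict Implicit. Unset Printing Implicit Defensive.

Section CopsRobber.
Variables (T : finType) (e : rel T).

Definition simple_graph : Prop := symmetric e /\ irreflexive e.
Definition connected_graph : Prop := forall x y : T, connect e x y.

Definition cnbhd (S : {set T}) : {set T} :=
  S :|: [set y | [exists x in S, e x y]].

Definition rel_minus (A : {set T}) : rel T :=
  [rel x y | [&& e x y, x \notin A & y \notin A]].

(* the connected component of v in G - A (for v \notin A) *)
Definition comp_minus (A : {set T}) (v : T) : {set T} :=
  [set w | connect (rel_minus A) v w].

Definition has_big_component (A : {set T}) : Prop :=
  exists2 v, v \notin A & (#|T| < 2 * #|comp_minus A v|)%N.

Definition cops (k : nat) := {ffun 'I_k -> T}.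
Definition occupied k (c : cops k) : {set T} := [set c i | i : 'I_k].

(* A deterministic cop strategy: given the sequence of robber positions
   r_0, ..., r_{t-1} (after each robber turn), it returns the cop positions at
   time t; [sigma [::]] is the initial placement. *)
Definition cop_strategy (k : nat) := seq T -> cops k.

Definition legal_cop_move k (c c' : cops k) : Prop :=
  forall i, c' i = c i \/ e (c i) (c' i).

Definition legal_strategy k (sigma : cop_strategy k) : Prop :=
  forall (s : seq T) (x : T), legal_cop_move (sigma s) (sigma (rcons s x)).

Definition cops_at k (sigma : cop_strategy k) (r : nat -> T) (t : nat) : cops k :=
  sigma [seq r i | i <- iota 0 t].

Definition robber_step (O : {set T}) (x y : T) : bool :=
  connect [rel a b | e a b && (b \notin O)] x y.

(* r is a legal robber play against sigma: r 0 is her initial choice (an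
   unoccupied vertex), r (t+1) her position after the robber turn of round t+1.
   Cops capture in round t+1 iff r t is occupied by the cops at time t+1;
   as long as no capture happened, robber moves are legal. *)
Definition captured k (sigma : cop_strategy k) (r : nat -> T) (t : nat) : bool :=
  r t \in occupied (cops_at sigma r t.+1).

Definition legal_robber_play k (sigma : cop_strategy k) (r : nat -> T) : Prop :=
  r 0 \notin occupied (sigma [::]) /\
  forall t, ~~ captured sigma r t ->
    robber_step (occupied (cops_at sigma r t.+1)) (r t) (r t.+1).

Definition cops_win (k : nat) : Prop :=
  exists sigma : cop_strategy k, legal_strategy sigma /\
    forall r : nat -> T, legal_robber_play sigma r -> exists t, captured sigma r t.

Definition cinf_gt (m : nat) : Prop := forall k, (k <= m)%N -> ~ cops_win k.

End CopsRobber.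

(* Main.v *)
Require Import Defs.
From mathcomp Require Import all_boot.
From mathcomp Require Import zify.
Set Implicit Arguments. Unset Strict Implicit.

Section Aux.
Variables (T : finType) (e : rel T) (x0 : T).

Definition bigv (A : {set T}) : T :=
  odflt x0 [pick v | (v \notin A) && (#|T| < 2 * #|comp_minus e A v|)%N].
Definition Bset (A : {set T}) : {set T} := comp_minus e A (bigv A).

Lemma Bset_big A : has_big_component e A ->
  (#|T| < 2 * #|Bset A|)%N /\ bigv A \notin A.
Proof.
move=> [v Hv Hc]; rewrite /Bset /bigv; case: pickP => [w /andP[H1 H2]|H] //=.
by have := H v; rewrite Hv Hc.
Qed.

Lemma comp_notin (A : {set T}) v w : v \notin A -> w \in comp_minus e A v -> w \notin A.
Proof.
rewrite inE => Hv /connectP [p Hp ->]; move: Hp.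
elim/last_ind: p => [|p y IH] //=.
by rewrite rcons_path last_rcons => /andP[_ /and3P[_ _ ->]].
Qed.

Lemma inter (X Y : {set T}) : (#|T| < 2 * #|X|)%N -> (#|T| < 2 * #|Y|)%N ->
  exists w, w \in X :&: Y.
Proof.
move=> HX HY; apply/set0Pn; apply/negP => /eqP E.
have := cardsUI X Y; rewrite E cards0 addn0.
have := subset_leq_card (subsetT (X :|: Y)); rewrite cardsT; lia.
Qed.

Variables (k : nat) (sigma : cop_strategy T k).

Definition Cs (s : seq T) := occupied (sigma s).
Definition Bs (s : seq T) := Bset (cnbhd e (Cs s)).
Definition fnext (s : seq T) : T :=
  if s is [::] then odflt x0 [pick w in Bs s]
  else odflt x0 [pick w in Bs (take (size s).-1 s) :&: Bs s].

Lemma fnext_rcons s x :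
  fnext (rcons s x) = odflt x0 [pick w in Bs s :&: Bs (rcons s x)].
Proof.
rewrite /fnext; case E: (rcons s x) => [|y s']; first by case: s E.
by rewrite -E size_rcons /= -cats1 take_size_cat.
Qed.

Fixpoint hist (t : nat) : seq T :=
  if t is t'.+1 then rcons (hist t') (fnext (hist t')) else [::].
Definition rob (t : nat) : T := fnext (hist t).

Lemma hist_map t : [seq rob i | i <- iota 0 t] = hist t.
Proof.
elim: t => [|t IH] //.
rewrite -addn1 iotaD map_cat IH /= cats1 addn1 /=. done.
Qed.

End Aux.

Theorem mainTheorem12 (T : finType) (e : rel T) (m : nat) :
  simple_graph e -> connected_graph e -> (0 < m)%N ->
  (forall S : {set T}, (#|S| <= m)%N -> has_big_component e (cnbhd e S)) ->
  cinf_gt e m.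
Proof.
move=> [esym eirr] _ _ Hbig k km [sigma [Hleg Hwin]].
have := Hbig set0; rewrite cards0 => /(_ isT) [x0 _ _].
have Ccard s : (#|Cs sigma s| <= m)%N.
  apply: leq_trans (leq_imset_card _ _) _; by rewrite card_ord.
have BB s : (#|T| < 2 * #|Bs e x0 sigma s|)%N /\
    forall w, w \in Bs e x0 sigma s -> w \notin cnbhd e (Cs sigma s).
  have [H1 H2] := Bset_big x0 (Hbig _ (Ccard s)).
  split => // w; exact: comp_notin H2.
have cop t : cops_at sigma (rob e x0 sigma) t = sigma (hist e x0 sigma t).
  by rewrite /cops_at hist_map.
have r0 : rob e x0 sigma 0 \in Bs e x0 sigma [::].
  rewrite /rob /= /fnext; case: pickP => [w //|H].
  have [w Hw] : exists w, w \in Bs e x0 sigma [::].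
    have [H1 _] := BB [::]; have [w] := inter H1 H1; rewrite inE => /andP[]; eauto.
  by have := H w; rewrite Hw.
have rS t : rob e x0 sigma t.+1 \in
    Bs e x0 sigma (hist e x0 sigma t) :&: Bs e x0 sigma (hist e x0 sigma t.+1).
  rewrite /rob [hist _ _ _ t.+1]/= fnext_rcons; case: pickP => [w //|H].
  have [w Hw] := inter (BB (hist e x0 sigma t)).1 (BB (rcons (hist e x0 sigma t) (rob e x0 sigma t))).1.
  by have := H w; rewrite Hw.
have rin t : rob e x0 sigma t \in Bs e x0 sigma (hist e x0 sigma t).
  case: t => [|t] //; by have := rS t; rewrite inE => /andP[].
have Csub t : Cs sigma (hist e x0 sigma t.+1) \subset cnbhd e (Cs sigma (hist e x0 sigma t)).
  apply/subsetP => y /imsetP [i _ ->].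
  have := Hleg (hist e x0 sigma t) (rob e x0 sigma t) i.
  rewrite /= /cnbhd => -[->|He]; rewrite !inE.
    by rewrite /Cs /occupied imset_f.
  apply/orP; right; apply/existsP; exists (sigma (hist e x0 sigma t) i).
  by rewrite He andbT /Cs /occupied imset_f.
have nocap t : ~~ captured sigma (rob e x0 sigma) t.
  rewrite /captured cop; apply/negP => Hc.
  have := (BB (hist e x0 sigma t)).2 _ (rin t).
  by rewrite (subsetP (Csub t)).
suff Hl : legal_robber_play e sigma (rob e x0 sigma).
  by move/(_ _ Hl): Hwin => [t]; rewrite (negbTE (nocap t)).
split.
  apply/negP => H; have := (BB [::]).2 _ r0.
  by rewrite /cnbhd inE -/(Cs sigma [::]) H.
move=> t _; rewrite /robber_step cop.
set A := cnbhd e (Cs sigma (hist e x0 sigma t)).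
have symR : symmetric (rel_minus e A).
  by move=> a b; rewrite /rel_minus /= esym andbCA andbA [_ && (a \notin A)]andbC -andbA andbCA.
have := rin t; have := rS t; rewrite inE => /andP[Hb _] Ha.
move: Hb Ha; rewrite /Bs /Bset /comp_minus -/A !inE => Hb Ha.
have Hc : connect (rel_minus e A) (rob e x0 sigma t) (rob e x0 sigma t.+1).
  apply: (connect_trans _ Hb); rewrite (sym_connect_sym symR); exact: Ha.
apply: (connect_sub _ Hc) => a b /and3P[Hab _ Hb'].
apply: connect1; rewrite /= Hab /=; apply/negP => Hbin.
move/negP: Hb'; apply; exact: (subsetP (Csub t)).
Qed.
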